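(* Let $(F,\mathrm{Frob})\in\mathcal{S}$, $a\in F^n$ and $A\subseteq F$, and suppose $\dim_{rk}(a/A)=k$. Then there is a finite set $\{P_1(x),\dots,P_m(x)\}$ of difference polynomials with parameters in $A$ such that $(F,\mathrm{Frob})\models\bigwedge_{i\le m}P_i(a)=0$ and $\dim_{rk}\big(\bigwedge_{i\le m}P_i(x)=0\big)=k$.
   Context: $\mathbb{P}$ = primes, $\mathrm{Frob}_p:x\mapsto x^p$, $\mathcal{L}_\sigma$ = language of rings plus unary $\sigma$. For a parameter-free $\mathcal{L}_\sigma$-formula $\varphi$ and prime $p$, $\varphi_p$ replaces each $\sigma(t)$ by $t^p$. For each ring formula $\psi(x,y)$, $|x|=n$, fix $C_\psi>0$ and finite $D_\psi\subseteq\{0,..,n\}\times\mathbb{R}^{>0}$ such that for all finite fields $\mathbb{F}_q$ and $a$ with $\psi(\mathbb{F}_q^n,a)\ne\emptyset$ some $(d,\mu)\in D_\psi$ has $\big||\psi(\mathbb{F}_q^n,a)|-\mu q^d\big|\le C_\psi q^{d-1/2}$; $E_\psi=\{\mu:(d,\mu)\in D_\psi\}$; $N^p_\varphi=\max\{\mu,1/\mu,2\log_p(2C_{\varphi_p}/\mu):\mu\in E_{\varphi_p}\}$; $f(\ell,p)=\max\{N^p_\varphi:|\varphi|\le\ell\}$. $\mathcal{S}$ = ultraproducts $\prod_p(\mathbb{F}_{p^{k_p}},\mathrm{Frob}_p)/\mathcal{U}$, $\mathcal{U}$ non-principal on $\mathbb{P}$, $k_p\ge f(p,p)$. With $(\tilde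 F,\mathrm{Frob})=\prod_p(\tilde{\mathbb{F}}_p,\mathrm{Frob}_p)/\mathcal{U}$ (a model of ACFA containing $F$), $\dim_{rk}(a/A)$ is the transformal transcendence degree of $a$ over the difference field generated by $A$, and for a formula $\pi$ over $A$, $\dim_{rk}(\pi)=\max\{\dim_{rk}(c/A):c\models\pi\}$ with realizations in a saturated elementary extension of $(\tilde F,\mathrm{Frob})$. *)

(* Defs.v *)
From Stdlib Require Import Reals ClassicalDescription.
From HB Require Import structures.
From mathcomp Require Import all_boot all_order all_algebra all_field.
Set Implicit Arguments.
Unset Strict Implicit.
Unset Printing Implicit Defensive.
Import GRing.Theory.

(* L_sigma-structures: a carrier with an interpretation of equality     *)
(* (a relation, so that ultraproducts can be taken as setoids), of the  *)
(* ring operations and of the unary symbol sigma.                      *)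
Record str := Str {
  car :> Type;
  eqr : car -> car -> Prop;
  zr : car; on : car;
  ad : car -> car -> car; ml : car -> car -> car;
  op : car -> car; sg : car -> car }.

Definition ring_str (T : nzRingType) (s : T -> T) : str :=
  @Str T (@eq T) 0%R 1%R (@GRing.add T) (@GRing.mul T) (@GRing.opp T) s.

Definition ultra (I : Type) (U : (I -> Prop) -> Prop) (M : I -> str) : str :=
  @Str (forall i, M i)
    (fun x y => U (fun i => eqr (x i) (y i)))
    (fun i => zr (M i)) (fun i => on (M i))
    (fun x y i => ad (x i) (y i)) (fun x y i => ml (x i) (y i))
    (fun x i => op (x i)) (fun x i => sg (x i)).

Definition ultrafilter (I : Type) (U : (I -> Prop) -> Prop) : Prop :=
  U (fun _ => True) /\ ~ U (fun _ => False) /\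
  (forall X Y : I -> Prop, U X -> (forall i, X i -> Y i) -> U Y) /\
  (forall X Y : I -> Prop, U X -> U Y -> U (fun i => X i /\ Y i)) /\
  (forall X : I -> Prop, U X \/ U (fun i => ~ X i)).

Definition nonprincipal (I : Type) (U : (I -> Prop) -> Prop) : Prop :=
  forall i0 : I, ~ U (fun i => i = i0).

(* Syntax of L_sigma: terms (with constants from X, i.e. parameters)   *)
Inductive term (X : Type) : Type :=
| Var of nat | Cst of X | Zero | One
| Add of term X & term X | Mul of term X & term X
| Opp of term X | Sig of term X.
Arguments Var {X}. Arguments Zero {X}. Arguments One {X}.

Inductive form (X : Type) : Type :=
| FEq of term X & term X
| FNeg of form X
| FAnd of form X & form X
| FEx of nat & form X.

Definition upd (T : Type) (v : nat -> T) (i : nat) (y : T) : nat -> T :=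
  fun j => if j == i then y else v j.

Fixpoint evalt (M : str) (X : Type) (cs : X -> M) (v : nat -> M) (t : term X)
  : M :=
  match t with
  | Var i => v i
  | Cst x => cs x
  | Zero => zr M
  | One => on M
  | Add s u => ad (evalt cs v s) (evalt cs v u)
  | Mul s u => ml (evalt cs v s) (evalt cs v u)
  | Opp s => op (evalt cs v s)
  | Sig s => sg (evalt cs v s)
  end.

Fixpoint sat (M : str) (X : Type) (cs : X -> M) (v : nat -> M) (f : form X)
  : Prop :=
  match f with
  | FEq s u => eqr (evalt cs v s) (evalt cs v u)
  | FNeg g => ~ sat cs v g
  | FAnd g h => sat cs v g /\ sat cs v h
  | FEx i g => exists y : M, sat cs (upd v i y) g
  end.

Definition form0 := form Empty_set.
Definition nocst (M : Type) : Empty_set -> M := fun e => match e with end.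

(* Length of a formula; variable v_i counts as i+1 symbols (so that there *)
(* are finitely many formulas of bounded length).                        *)
Fixpoint tsize (X : Type) (t : term X) : nat :=
  match t with
  | Var i => i.+1
  | Cst _ | Zero | One => 1
  | Add s u | Mul s u => (tsize s + tsize u).+1
  | Opp s | Sig s => (tsize s).+1
  end.
Fixpoint fsize (X : Type) (f : form X) : nat :=
  match f with
  | FEq s u => (tsize s + tsize u).+1
  | FNeg g => (fsize g).+1
  | FAnd g h => (fsize g + fsize h).+1
  | FEx i g => (i.+1 + fsize g).+1
  end.

Fixpoint tsfree (X : Type) (t : term X) : Prop :=
  match t with
  | Add s u | Mul s u => tsfree s /\ tsfree u
  | Opp s => tsfree s
  | Sig _ => False
  | _ => True
  end.
Fixpoint fsfree (X : Type) (f : form X) : Prop :=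
  match f with
  | FEq s u => tsfree s /\ tsfree u
  | FNeg g => fsfree g
  | FAnd g h => fsfree g /\ fsfree h
  | FEx _ g => fsfree g
  end.

Fixpoint tpow (X : Type) (t : term X) (m : nat) : term X :=
  match m with 0 => One | m'.+1 => Mul t (tpow t m') end.
Fixpoint ttrans (X : Type) (p : nat) (t : term X) : term X :=
  match t with
  | Var i => Var i | Cst x => Cst x | Zero => Zero | One => One
  | Add s u => Add (ttrans p s) (ttrans p u)
  | Mul s u => Mul (ttrans p s) (ttrans p u)
  | Opp s => Opp (ttrans p s)
  | Sig s => tpow (ttrans p s) p
  end.
Fixpoint ftrans (X : Type) (p : nat) (f : form X) : form X :=
  match f with
  | FEq s u => FEq (ttrans p s) (ttrans p u)
  | FNeg g => FNeg (ftrans p g)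
  | FAnd g h => FAnd (ftrans p g) (ftrans p h)
  | FEx i g => FEx i (ftrans p g)
  end.

Definition join (T : Type) (n : nat) (x : 'I_n -> T) (y : nat -> T) : nat -> T :=
  fun i => odflt (y i) (omap x (insub i : option 'I_n)).

Definition decP (P : Prop) : bool :=
  if excluded_middle_informative P then true else false.

Definition count_sol (F : finFieldType) (n : nat) (y : nat -> F) (psi : form0)
  : nat :=
  #|[set x : {ffun 'I_n -> F} |
      decP (sat (M := @ring_str F id) (nocst _) (join x y) psi)]|.

Definition CDM (C : form0 -> nat -> R) (D : form0 -> nat -> list (nat * R))
  : Prop :=
  forall (psi : form0) (n : nat), fsfree psi ->
  Rlt R0 (C psi n) /\
  (forall dm, List.In dm (D psi n) -> (dm.1 <= n)%N /\ Rlt R0 dm.2) /\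
  forall (F : finFieldType) (y : nat -> F),
    (0 < count_sol n y psi)%N ->
    exists dm, List.In dm (D psi n) /\
      Rle (Rabs (Rminus (INR (count_sol n y psi))
                        (Rmult dm.2 (pow (INR #|F|) dm.1))))
          (Rdiv (Rmult (C psi n) (pow (INR #|F|) dm.1)) (sqrt (INR #|F|))).

(* kp >= f(p,p) = max { N^p_phi : |phi| <= p } *)
Definition f_bound (C : form0 -> nat -> R) (D : form0 -> nat -> list (nat * R))
  (p kp : nat) : Prop :=
  forall (phi : form0) (n : nat), (fsize phi + n <= p)%N ->
  forall dm, List.In dm (D (ftrans p phi) n) ->
    Rle dm.2 (INR kp) /\ Rle (Rinv dm.2) (INR kp) /\
    Rle (Rmult (INR 2) (Rdiv (ln (Rdiv (Rmult (INR 2) (C (ftrans p phi) n)) dm.2))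
                             (ln (INR p))))
        (INR kp).

Definition prime_t := {p : nat | prime p}.

Definition alg_closure_Fp (K : closedFieldType) (p : nat) : Prop :=
  (p%:R == 0 :> K)%R /\
  forall x : K, exists q : {poly K}, (q != 0)%R /\
    (forall i, exists m : nat, (q`_i = m%:R)%R) /\ root q x.

Definition Fstr (U : (prime_t -> Prop) -> Prop) (Fp : prime_t -> finFieldType)
  : str := ultra U (fun p => @ring_str (Fp p) (fun x => (x ^+ proj1_sig p)%R)).

Definition Ftstr (U : (prime_t -> Prop) -> Prop) (Kp : prime_t -> closedFieldType)
  : str := ultra U (fun p => @ring_str (Kp p) (fun x => (x ^+ proj1_sig p)%R)).

Definition iota_u (U : (prime_t -> Prop) -> Prop) (Fp : prime_t -> finFieldType)
  (Kp : prime_t -> closedFieldType) (iota : forall p, {rmorphism Fp p -> Kp p})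
  : Fstr U Fp -> Ftstr U Kp := fun x p => iota p (x p).

Definition dsubfield (M : str) (S : M -> Prop) : Prop :=
  (forall x y, eqr x y -> S x -> S y) /\ S (zr M) /\ S (on M) /\
  (forall x y, S x -> S y -> S (ad x y)) /\ (forall x, S x -> S (op x)) /\
  (forall x y, S x -> S y -> S (ml x y)) /\
  (forall x y, S x -> ~ eqr x (zr M) -> eqr (ml x y) (on M) -> S y) /\
  (forall x, S x -> S (sg x)) /\
  (forall x y, S x -> eqr (sg y) x -> S y).

Definition dfield_gen (M : str) (B : M -> Prop) (x : M) : Prop :=
  forall S, dsubfield S -> (forall b, B b -> S b) -> S x.

Definition pw (M : str) (y : M) (e : nat) : M := iter e (ml y) (on M).
Definition monom (M : str) (ys : seq M) (es : seq nat) : M :=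
  foldr (fun ye acc => ml (pw ye.1 ye.2) acc) (on M) (zip ys es).
(* a polynomial in the variables ys: list of (coefficient, exponent vector) *)
Definition peval (M : str) (ys : seq M) (P : seq (M * seq nat)) : M :=
  foldr (fun ce acc => ad (ml ce.1 (monom ys ce.2)) acc) (zr M) P.

Definition alg_dep (M : str) (K : M -> Prop) (ys : seq M) : Prop :=
  exists P : seq (M * seq nat),
    (forall ce, List.In ce P -> K ce.1 /\ size ce.2 = size ys) /\
    uniq (map snd P) /\
    (exists ce, List.In ce P /\ ~ eqr ce.1 (zr M)) /\
    eqr (peval ys P) (zr M).

Definition tindep (M : str) (K : M -> Prop) (n : nat) (c : 'I_n -> M)
  (J : {set 'I_n}) : Prop :=
  forall N : nat,
    ~ alg_dep K [seq iter j (@sg M) (c i) | i <- enum J, j <- iota 0 N].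

Definition is_trdeg (M : str) (B : M -> Prop) (n : nat) (c : 'I_n -> M)
  (k : nat) : Prop :=
  (exists J : {set 'I_n}, #|J| = k /\ tindep (dfield_gen B) c J) /\
  (forall J : {set 'I_n}, tindep (dfield_gen B) c J -> (#|J| <= k)%N).

Definition elem_ext (N M : str) (h : N -> M) : Prop :=
  forall (phi : form0) (v : nat -> N),
    sat (nocst N) v phi <-> sat (nocst M) (fun i => h (v i)) phi.

Definition realizes (M : str) (X : Type) (cs : X -> M) (n : nat)
  (Ps : list (term X)) (c : 'I_n -> M) : Prop :=
  forall P, List.In P Ps -> eqr (evalt cs (join c (fun _ => zr M)) P) (zr M).

Fixpoint tcsts_in (X : Type) (A : X -> Prop) (t : term X) : Prop :=
  match t with
  | Cst x => A x
  | Add s u | Mul s u => tcsts_in A s /\ tcsts_in A u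
  | Opp s | Sig s => tcsts_in A s
  | _ => True
  end.
Fixpoint tvars_lt (X : Type) (n : nat) (t : term X) : Prop :=
  match t with
  | Var i => (i < n)%N
  | Add s u | Mul s u => tvars_lt n s /\ tvars_lt n u
  | Opp s | Sig s => tvars_lt n s
  | _ => True
  end.

(* dim_rk( /\_{P in Ps} P(x) = 0 ) = k, where the parameters X are placed in
   the structure N by cs and A is the parameter set: the maximum of the
   transformal transcendence degrees over A of realizations in elementary
   extensions of N is k. *)
Definition dim_rk_eq (N : str) (X : Type) (cs : X -> N) (A : X -> Prop)
  (n : nat) (Ps : list (term X)) (k : nat) : Prop :=
  (exists (M : str) (h : N -> M) (c : 'I_n -> M),
     elem_ext h /\ realizes (fun x => h (cs x)) Ps c /\
     is_trdeg (fun z => exists x, A x /\ z = h (cs x)) c k) /\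
  (forall (M : str) (h : N -> M) (c : 'I_n -> M),
     elem_ext h -> realizes (fun x => h (cs x)) Ps c ->
     forall J : {set 'I_n},
       tindep (dfield_gen (fun z => exists x, A x /\ z = h (cs x))) c J ->
       (#|J| <= k)%N).

(* Main.v *)
Require Import Defs.
From Stdlib Require Import Reals ClassicalDescription Classical.
From HB Require Import structures.
From mathcomp Require Import all_boot all_order all_algebra all_field.
From mathcomp Require Import ring zify.
Set Implicit Arguments.
Unset Strict Implicit.
Unset Printing Implicit Defensive.
Import GRing.Theory.

Fixpoint tnovar (X : Type) (t : term X) : Prop :=
  match t with
  | Var _ => False
  | Add s u | Mul s u => tnovar s /\ tnovar u
  | Opp s | Sig s => tnovar s
  | _ => True
  end.

Lemma evalt_iterSig (M : str) X (cs : X -> M) v j (t : term X) :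
  evalt cs v (iter j (@Sig X) t) = iter j (@sg M) (evalt cs v t).
Proof. by elim: j => //= j ->. Qed.

Definition tpw X (y : term X) e := iter e (Mul y) One.
Definition tmonom X (ys : seq (term X)) (es : seq nat) : term X :=
  foldr (fun ye acc => Mul (tpw ye.1 ye.2) acc) One (zip ys es).
Definition tpeval X (ys : seq (term X)) (P : seq (term X * seq nat)) : term X :=
  foldr (fun ce acc => Add (Mul ce.1 (tmonom ys ce.2)) acc) Zero P.

Lemma evalt_tpw (M : str) X (cs : X -> M) v y e :
  evalt cs v (tpw y e) = pw (evalt cs v y) e.
Proof. by elim: e => //= e; rewrite /tpw /pw /= => ->. Qed.

Lemma evalt_tmonom (M : str) X (cs : X -> M) v ys es :
  evalt cs v (tmonom ys es) = monom (map (evalt cs v) ys) es.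
Proof.
elim: ys es => [|y ys IH] [|e es] //=.
by rewrite /tmonom /monom /= evalt_tpw; congr (ml _ _); apply: IH.
Qed.

Lemma evalt_tpeval (M : str) X (cs : X -> M) v ys P :
  evalt cs v (tpeval ys P) =
  peval (map (evalt cs v) ys) (map (fun ce => (evalt cs v ce.1, ce.2)) P).
Proof.
elim: P => //= ce P IH.
by rewrite /tpeval /peval /= evalt_tmonom; congr (ad _ _); apply: IH.
Qed.

Fixpoint tcs (X : Type) (t : term X) : seq X :=
  match t with
  | Cst x => [:: x]
  | Add s u | Mul s u => tcs s ++ tcs u
  | Opp s | Sig s => tcs s
  | _ => [::]
  end.

Fixpoint tr (X : Type) (t : term X) (k : nat) : term Empty_set :=
  match t with
  | Var _ => Zero | Cst _ => Var k | Zero => Zero | One => One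
  | Add s u => Add (tr s k) (tr u (k + size (tcs s)))
  | Mul s u => Mul (tr s k) (tr u (k + size (tcs s)))
  | Opp s => Opp (tr s k)
  | Sig s => Sig (tr s k)
  end.

Lemma evalt_tr (M : str) X (cs : X -> M) v w (x0 : X) (t : term X) k :
  tnovar t ->
  (forall i, (i < size (tcs t))%N -> w (k + i)%N = cs (nth x0 (tcs t) i)) ->
  evalt (nocst M) w (tr t k) = evalt cs v t.
Proof.
elim: t k => //=.
- by move=> x k _ /(_ 0%N isT); rewrite addn0.
- move=> s IHs u IHu k [ns nu] H; rewrite (IHs k ns) ?(IHu _ nu) //.
  + move=> i Hi; rewrite -addnA H ?size_cat ?ltn_add2l // nth_cat.
    by rewrite ltnNge leq_addr /= addKn.
  + by move=> i Hi; rewrite H ?size_cat ?nth_cat ?Hi // (leq_trans Hi) ?leq_addr.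
- move=> s IHs u IHu k [ns nu] H; rewrite (IHs k ns) ?(IHu _ nu) //.
  + move=> i Hi; rewrite -addnA H ?size_cat ?ltn_add2l // nth_cat.
    by rewrite ltnNge leq_addr /= addKn.
  + by move=> i Hi; rewrite H ?size_cat ?nth_cat ?Hi // (leq_trans Hi) ?leq_addr.
- by move=> s IHs k ns H; rewrite (IHs k ns).
- by move=> s IHs k ns H; rewrite (IHs k ns).
Qed.

Lemma transfer_ne (N M : str) (h : N -> M) X (cs : X -> N) v v' (x0 : X) t :
  elem_ext h -> tnovar t -> ~ eqr (evalt cs v t) (zr N) ->
  ~ eqr (evalt (fun x => h (cs x)) v' t) (zr M).
Proof.
move=> hE nt H.
pose w := fun i => cs (nth x0 (tcs t) i).
have := hE (FNeg (FEq (tr t 0) Zero)) w => /= [[H1 _]].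
rewrite -(@evalt_tr _ _ (fun x => h (cs x)) v' (fun i => h (w i)) x0 t 0) //.
apply: H1; rewrite (@evalt_tr _ _ cs v w x0 t 0) //.
Qed.

Lemma dsub_closed (M : str) X (cs : X -> M) (A : X -> Prop) (S : M -> Prop) v t :
  dsubfield S -> (forall x, A x -> S (cs x)) -> tcsts_in A t -> tnovar t ->
  S (evalt cs v t).
Proof.
move=> [_ [S0 [S1 [SD [SN [SM [_ [Sg _]]]]]]]] HA.
elim: t => //=.
- by move=> x Ax _; apply: HA.
- by move=> s IHs u IHu [as_ au] [ns nu]; apply: SD; [apply: IHs|apply: IHu].
- by move=> s IHs u IHu [as_ au] [ns nu]; apply: SM; [apply: IHs|apply: IHu].
- by move=> s IHs as_ ns; apply: SN; apply: IHs.
- by move=> s IHs as_ ns; apply: Sg; apply: IHs.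
Qed.

Open Scope ring_scope.

Definition frn (K : nzRingType) (p m : nat) (z : K) := iter m (fun z => z ^+ p) z.
Definition mon (K : nzRingType) (ys : seq K) (es : seq nat) : K :=
  foldr (fun ye acc => ye.1 ^+ ye.2 * acc) 1 (zip ys es).
Definition pev (K : nzRingType) (ys : seq K) (P : seq (K * seq nat)) : K :=
  foldr (fun ce acc => ce.1 * mon ys ce.2 + acc) 0 P.

Lemma peval_ring (K : nzRingType) (s : K -> K) ys P :
  peval (M := ring_str s) ys P = pev ys P.
Proof.
have pwE y e : pw (M := ring_str s) y e = y ^+ e.
  by elim: e => // e IH; rewrite exprS -IH.
have monE es : monom (M := ring_str s) ys es = mon ys es.
  elim: ys es => [|y ys IH] [|e es] //=.
  by rewrite /monom /mon /= pwE; congr (_ * _); apply: IH.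
elim: P => //= ce P IH; rewrite /peval /pev /=; congr (_ + _); last exact: IH.
by rewrite -monE.
Qed.

Section Frob.
Variables (K : fieldType) (p : nat).
Hypothesis pchK : (p \in GRing.pchar K).
Implicit Types x y : K.

Lemma frSr m (x : K) : frn p m.+1 x = frn p m x ^+ p.
Proof. by []. Qed.

Lemma frD m x y : frn p m (x + y) = frn p m x + frn p m y.
Proof.
elim: m => // m IH; rewrite !frSr IH.
by have := pFrobenius_autD_comm pchK (mulrC (frn p m x) (frn p m y)); rewrite !pFrobenius_autE.
Qed.
Lemma frM m x y : frn p m (x * y) = frn p m x * frn p m y.
Proof. by elim: m => // m IH; rewrite !frSr IH exprMn. Qed.
Lemma fr1 m : frn p m (1 : K) = 1.
Proof. by elim: m => // m IH; rewrite !frSr IH expr1n. Qed.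
Lemma fr0 m : frn p m (0 : K) = 0.
Proof.
elim: m => // m IH; rewrite !frSr IH expr0n.
by rewrite (gtn_eqF (prime_gt0 (pcharf_prime pchK))).
Qed.
Lemma frN m x : frn p m (- x) = - frn p m x.
Proof.
elim: m => // m IH; rewrite !frSr IH.
by have := pFrobenius_autN pchK (frn p m x); rewrite !pFrobenius_autE.
Qed.
Lemma frX m x e : frn p m (x ^+ e) = frn p m x ^+ e.
Proof. by elim: e => [|e IH]; rewrite ?expr0 ?fr1 // !exprS frM IH. Qed.
Lemma fr_eq0 m x : (frn p m x == 0) = (x == 0).
Proof.
elim: m => //= m IH; rewrite /frn /= -!/(frn _ _ _) expf_eq0 IH.
by rewrite (prime_gt0 (pcharf_prime pchK)).
Qed.
Lemma frS m x : frn p m.+1 x = frn p m (x ^+ p).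
Proof. by rewrite /frn iterSr. Qed.
Lemma frDn m m' x : frn p (m + m')%N x = frn p m (frn p m' x).
Proof. by rewrite /frn iterD. Qed.

Lemma fr_mon m (ys : seq K) es : frn p m (mon ys es) = mon (map (frn p m) ys) es.
Proof.
elim: ys es => [|y ys IH] [|e es] //=; rewrite ?fr1 //.
by rewrite /mon /= -/(mon _ _) frM frX IH.
Qed.
Lemma fr_pev m (ys : seq K) P :
  frn p m (pev ys P) = pev (map (frn p m) ys) (map (fun ce => (frn p m ce.1, ce.2)) P).
Proof.
elim: P => [|ce P IH] /=; rewrite ?fr0 //.
by rewrite /pev /= -!/(pev _ _) frD frM fr_mon IH.
Qed.
End Frob.

Lemma pev_scale (K : comNzRingType) (t : K) ys P :
  t * pev ys P = pev ys (map (fun ce => (ce.1 * t, ce.2)) P).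
Proof.
elim: P => [|ce P IH] /=; rewrite ?mulr0 //.
by rewrite /pev /= -!/(pev _ _) -IH; ring.
Qed.

Definition pad (ns NN m : nat) (e : seq nat) : seq nat :=
  flatten [seq nseq m 0%N ++ b | b <- reshape (nseq ns NN) e].

Lemma pad_cons ns NN m e : pad ns.+1 NN m e =
  (nseq m 0%N ++ take NN e) ++ pad ns NN m (drop NN e).
Proof. by []. Qed.

Lemma size_pad ns NN m e : size e = (ns * NN)%N -> size (pad ns NN m e) = (ns * (m + NN))%N.
Proof.
elim: ns e => [|ns IH] e He //=.
rewrite pad_cons !size_cat size_nseq IH; last by rewrite size_drop He mulSn addKn.
rewrite size_takel; last by rewrite He mulSn leq_addr.
by rewrite mulSn; lia.
Qed.

Lemma pad_inj ns NN m e1 e2 : size e1 = (ns * NN)%N -> size e2 = (ns * NN)%N ->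
  pad ns NN m e1 = pad ns NN m e2 -> e1 = e2.
Proof.
elim: ns e1 e2 => [|ns IH] e1 e2 H1 H2.
  by move: H1 H2; rewrite mul0n => /size0nil -> /size0nil ->.
rewrite !pad_cons => /eqP; rewrite eqseq_cat; last first.
  by rewrite !size_cat !size_takel // ?H1 ?H2 mulSn leq_addr.
case/andP => /eqP Ht0 /eqP /IH Hd.
have Ht : take NN e1 = take NN e2.
  by have := congr1 (drop m) Ht0; rewrite !drop_size_cat ?size_nseq.
 rewrite -(cat_take_drop NN e1) -(cat_take_drop NN e2) Ht Hd //.
- by rewrite size_drop H1 mulSn addKn.
- by rewrite size_drop H2 mulSn addKn.
Qed.

Section Mon.
Variable K : comNzRingType.
Implicit Types ys : seq K.

Lemma mon_cat ys1 ys2 es1 es2 : size ys1 = size es1 ->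
  mon (ys1 ++ ys2) (es1 ++ es2) = mon ys1 es1 * mon ys2 es2.
Proof.
elim: ys1 es1 => [|y ys1 IH] [|e es1] //=; first by rewrite mul1r.
by move=> [Hs]; rewrite /mon /= -!/(mon _ _) IH // mulrA.
Qed.

Lemma mon_zero ys : mon ys (nseq (size ys) 0%N) = 1.
Proof. by elim: ys => //= y ys IH; rewrite /mon /= -!/(mon _ _) IH expr0 mulr1. Qed.

Lemma pad_block (g : nat -> K) NN m b : size b = NN ->
  mon [seq g j | j <- iota 0%N (m + NN)%N] (nseq m 0%N ++ b) =
  mon [seq g (m + j)%N | j <- iota 0%N NN] b.
Proof.
move=> Hb.
have E : iota 0%N (m + NN)%N = iota 0%N m ++ map (addn m) (iota 0%N NN).
  by rewrite iotaD -iotaDl add0n addn0.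
rewrite E map_cat -map_comp mon_cat ?size_map ?size_iota ?size_nseq //.
have -> : nseq m 0%N = nseq (size [seq g j | j <- iota 0%N m]) 0%N by rewrite size_map size_iota.
by rewrite mon_zero mul1r.
Qed.

Lemma pad_mon (I : Type) (s : seq I) (f : I -> nat -> K) NN m e :
  size e = (size s * NN)%N ->
  mon [seq f i (m + j)%N | i <- s, j <- iota 0%N NN] e =
  mon [seq f i j | i <- s, j <- iota 0%N (m + NN)%N] (pad (size s) NN m e).
Proof.
elim: s e => [|i s IH] e He /=.
  by move: He; rewrite mul0n => /size0nil ->.
rewrite pad_cons.
have sz : size (take NN e) = NN by rewrite size_takel // He mulSn leq_addr.
rewrite -{1}(cat_take_drop NN e) mon_cat ?size_map ?size_iota //.
rewrite mon_cat ?size_map ?size_iota ?size_cat ?size_nseq ?sz //.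
rewrite (pad_block (f i)) // IH //.
by rewrite size_drop He mulSn addKn.
Qed.

Lemma pev_eq ys1 ys2 (P Q : seq (K * seq nat)) (g : K -> K) (h : seq nat -> seq nat) :
  map (fun ce => g ce.1) P = map fst Q -> map snd P = map snd Q ->
  (forall ce, List.In ce P -> mon ys1 ce.2 = mon ys2 (h ce.2)) ->
  pev ys1 (map (fun ce => (g ce.1, ce.2)) P) = pev ys2 (map (fun ce => (ce.1, h ce.2)) Q).
Proof.
elim: P Q => [|ce P IH] [|ce' Q] //= [H1 H1'] [H2 H2'] Hm.
rewrite /pev /= -!/(pev _ _) H1 -H2 Hm; last by left.
by rewrite (IH Q) // => c Hc; apply: Hm; right.
Qed.
End Mon.

Lemma key (K : fieldType) p (pchK : p \in GRing.pchar K) (I : Type) (s : seq I)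
  (f : I -> K) NN m (P Q : seq (K * seq nat)) (t : K) :
  (forall ce, List.In ce P -> size ce.2 = (size s * NN)%N) ->
  pev [seq frn p j (f i) | i <- s, j <- iota 0%N NN] P = 0 ->
  map (fun ce => frn p m ce.1 * t) P = map fst Q -> map snd P = map snd Q ->
  pev [seq frn p j (f i) | i <- s, j <- iota 0%N (m + NN)%N]
      (map (fun ce => (ce.1, pad (size s) NN m ce.2)) Q) = 0.
Proof.
move=> Hs H0 H1 H2.
have := congr1 (fun z => t * frn p m z) H0; rewrite /= fr0 // mulr0 => <-.
rewrite fr_pev // pev_scale -map_comp.
rewrite (pev_eq (ys2 := [seq frn p j (f i) | i <- s, j <- iota 0%N (m + NN)%N])
  (g := fun z => frn p m z * t) (h := pad (size s) NN m) (Q := Q)).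
- by [].
- by rewrite -H1.
- by [].
- move=> ce /Hs Hce; rewrite map_flatten -map_comp.
  rewrite -(@pad_mon K I s (fun i j => frn p j (f i)) NN m) //.
  congr (mon _ _); congr flatten; apply: eq_map => i /=; rewrite -map_comp.
  by apply: eq_map => j /=; rewrite frDn.
Qed.

Open Scope ring_scope.

Lemma inP (T : eqType) (x : T) s : reflect (List.In x s) (x \in s).
Proof.
elim: s => [|y s IH] /=; first by right.
rewrite in_cons; apply: (iffP orP).
- by case=> [/eqP ->|/IH]; [left|right].
- by case=> [->|/IH]; [left; rewrite eqxx|right].
Qed.

Lemma size_ys (I T : Type) (s : seq I) (f : I -> nat -> T) NN :
  size [seq f i j | i <- s, j <- iota 0%N NN] = (size s * NN)%N.
Proof. by rewrite size_allpairs size_iota. Qed.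

Lemma size_length (T : Type) (l : seq T) : size l = length l.
Proof. by elim: l => //= x l ->. Qed.

Lemma nth_List (T : Type) (x0 : T) s i : nth x0 s i = List.nth i s x0.
Proof. by elim: s i => [|x s IH] [|i] //=. Qed.

Lemma map2E (T1 T2 T3 : Type) (f : T2 -> T3) (g : T1 -> T2) l :
  map f (map g l) = map (fun x => f (g x)) l.
Proof. by elim: l => //= x l ->. Qed.

Section UF.
Variables (I : Type) (U : (I -> Prop) -> Prop).
Hypothesis HU : ultrafilter U.

Lemma uf_mono (X Y : I -> Prop) : U X -> (forall i, X i -> Y i) -> U Y.
Proof. by case: HU => _ [_ [H _]]; apply: H. Qed.
Lemma uf_and (X Y : I -> Prop) : U X -> U Y -> U (fun i => X i /\ Y i).
Proof. by case: HU => _ [_ [_ [H _]]]; apply: H. Qed.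
Lemma uf_all (Y : I -> Prop) : (forall i, Y i) -> U Y.
Proof. by move=> H; apply: (uf_mono (X := fun _ => True)) => //; case: HU. Qed.
Lemma uf_not (X : I -> Prop) : ~ U X -> U (fun i => ~ X i).
Proof. by case: HU => _ [_ [_ [_ H]]] nX; case: (H X). Qed.
Lemma uf_not2 (X : I -> Prop) : U (fun i => ~ X i) -> ~ U X.
Proof.
move=> H1 H2; case: HU => _ [HF _]; apply: HF.
by apply: uf_mono (uf_and H1 H2) _ => i [].
Qed.
End UF.

Section NSide.
Variables (U : (prime_t -> Prop) -> Prop) (Fp : prime_t -> finFieldType)
  (Kp : prime_t -> closedFieldType) (io : forall p, {rmorphism Fp p -> Kp p})
  (A : Fstr U Fp -> Prop).
Hypothesis HU : ultrafilter U.
Hypothesis Hch : forall p, alg_closure_Fp (Kp p) (proj1_sig p).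

Local Notation N := (Ftstr U Kp).
Local Notation X := (Fstr U Fp).

Lemma pchK p : proj1_sig p \in GRing.pchar (Kp p).
Proof. by apply/andP; split; [exact: (proj2_sig p) | case: (Hch p)]. Qed.

Definition ev (r : term X) : N := evalt (iota_u io) (fun _ => zr N) r.

Lemma iter_sgN m (x : N) p : iter m (@sg N) x p = frn (proj1_sig p) m (x p).
Proof. by elim: m => //= m IH; rewrite IH. Qed.

Lemma ev_iterSig m r p : ev (iter m (@Sig X) r) p = frn (proj1_sig p) m (ev r p).
Proof. by rewrite /ev evalt_iterSig iter_sgN. Qed.

Lemma pevalN (ys : seq N) (P : seq (N * seq nat)) p :
  peval ys P p = pev (map (fun y => y p) ys) (map (fun ce => (ce.1 p, ce.2)) P).
Proof.
rewrite -(peval_ring (s := fun x : Kp p => x ^+ proj1_sig p)).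
have pwE (y : N) e : pw y e p = pw (M := ring_str (fun x : Kp p => x ^+ proj1_sig p)) (y p) e.
  by elim: e => // e IH; exact: (congr1 (fun z => y p * z) IH).
have monE es : monom ys es p = monom (M := ring_str (fun x : Kp p => x ^+ proj1_sig p)) (map (fun y : N => y p) ys) es.
  elim: ys es => [|y ys IH] [|e es] //=.
  by rewrite /monom /= -/(monom _ _) pwE; congr (_ * _); apply: IH.
elim: P => //= ce P IH; rewrite /peval /=; congr (_ + _); last exact: IH.
by rewrite monE.
Qed.

Definition tcl (r : term X) := tcsts_in A r /\ tnovar r.

Definition Srep (x : N) := exists m s t, tcl s /\ tcl t /\
  U (fun p => ev t p != 0) /\
  U (fun p => frn (proj1_sig p) m (x p) * ev t p = ev s p).

Lemma uf2 (X1 X2 Y : prime_t -> Prop) : U X1 -> U X2 ->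
  (forall p, X1 p -> X2 p -> Y p) -> U Y.
Proof. move=> H1 H2 H; refine (uf_mono HU (uf_and HU H1 H2) _); by move=> p [] /H. Qed.
Lemma uf4 (X1 X2 X3 X4 Y : prime_t -> Prop) : U X1 -> U X2 -> U X3 -> U X4 ->
  (forall p, X1 p -> X2 p -> X3 p -> X4 p -> Y p) -> U Y.
Proof.
move=> H1 H2 H3 H4 H.
refine (uf_mono HU (uf_and HU (uf_and HU H1 H2) (uf_and HU H3 H4)) _).
by move=> p [[/H h1 /h1 h2] [/h2 h3 /h3]].
Qed.

Lemma evM a b p : ev (Mul a b) p = ev a p * ev b p. Proof. by []. Qed.
Lemma evD a b p : ev (Add a b) p = ev a p + ev b p. Proof. by []. Qed.
Lemma evN a p : ev (Opp a) p = - ev a p. Proof. by []. Qed.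
Lemma evS a p : ev (Sig a) p = ev a p ^+ proj1_sig p. Proof. by []. Qed.

Lemma mkSrep x m s t : tcl s -> tcl t -> U (fun p => ev t p != 0) ->
  U (fun p => frn (proj1_sig p) m (x p) * ev t p = ev s p) -> Srep x.
Proof. by move=> *; exists m, s, t. Qed.

Lemma tcl_iter m r : tcl r -> tcl (iter m (@Sig X) r).
Proof. by case=> H1 H2; elim: m => //= m []. Qed.

Lemma tcl_add a b : tcl a -> tcl b -> tcl (Add a b).
Proof. by move=> [? ?] [? ?]; split; split. Qed.
Lemma tcl_mul a b : tcl a -> tcl b -> tcl (Mul a b).
Proof. by move=> [? ?] [? ?]; split; split. Qed.

Lemma Srep_dsub : dsubfield Srep.
Proof.
have fr_ne p m (z : Kp p) : z != 0 -> frn (proj1_sig p) m z != 0.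
  by rewrite fr_eq0 //; apply: pchK.
split.
  move=> x y Hxy [m [s [t [cs [ct [Ht He]]]]]]; apply: (mkSrep (m := m) cs ct Ht).
  have Hxy' : U (fun p => x p = y p) := Hxy.
  by apply: (uf2 Hxy' He) => p <-.
split.
  apply: (@mkSrep _ 0%N Zero One (conj I I) (conj I I)).
  - by refine (uf_all HU (fun p => _)); exact: oner_neq0.
  - by refine (uf_all HU (fun p => _)); rewrite /= mul0r.
split.
  apply: (@mkSrep _ 0%N One One (conj I I) (conj I I)).
  - by refine (uf_all HU (fun p => _)); exact: oner_neq0.
  - by refine (uf_all HU (fun p => _)); rewrite /= mul1r.
split.
  move=> x y [m [s [t [cs [ct [Ht He]]]]]] [m' [s' [t' [cs' [ct' [Ht' He']]]]]].
  apply: (@mkSrep _ (m + m')%N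
     (Add (Mul (iter m' (@Sig X) s) (iter m (@Sig X) t'))
          (Mul (iter m (@Sig X) s') (iter m' (@Sig X) t)))
     (Mul (iter m' (@Sig X) t) (iter m (@Sig X) t'))).
  - by apply: tcl_add; apply: tcl_mul; apply: tcl_iter.
  - by apply: tcl_mul; apply: tcl_iter.
  - apply: (uf2 Ht Ht') => p h1 h2.
    by rewrite evM !ev_iterSig mulf_neq0 ?fr_ne.
  - apply: (uf4 Ht Ht' He He') => p _ _ h1 h2.
    rewrite evM evD !evM !ev_iterSig.
    have E1 : frn (proj1_sig p) (m + m')%N (x p) = frn (proj1_sig p) m' (frn (proj1_sig p) m (x p)).
      by rewrite addnC frDn.
    have E2 : frn (proj1_sig p) (m + m')%N (y p) = frn (proj1_sig p) m (frn (proj1_sig p) m' (y p)).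
      by rewrite frDn.
    have h1' := congr1 (frn (proj1_sig p) m') h1; rewrite frM ?pchK // in h1'.
    have h2' := congr1 (frn (proj1_sig p) m) h2; rewrite frM ?pchK // in h2'.
    rewrite /= frD ?pchK // E1 E2 -h1' -h2'; ring.
split.
  move=> x [m [s [t [[cs1 cs2] [ct [Ht He]]]]]].
  apply: (@mkSrep _ m (Opp s) t (conj cs1 cs2) ct Ht).
  apply: (uf2 Ht He) => p _ h; rewrite evN -h /= frN ?pchK //; ring.
split.
  move=> x y [m [s [t [cs [ct [Ht He]]]]]] [m' [s' [t' [cs' [ct' [Ht' He']]]]]].
  apply: (@mkSrep _ (m + m')%N
     (Mul (iter m' (@Sig X) s) (iter m (@Sig X) s'))
     (Mul (iter m' (@Sig X) t) (iter m (@Sig X) t'))).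
  - by apply: tcl_mul; apply: tcl_iter.
  - by apply: tcl_mul; apply: tcl_iter.
  - apply: (uf2 Ht Ht') => p h1 h2.
    by rewrite evM !ev_iterSig mulf_neq0 ?fr_ne.
  - apply: (uf4 Ht Ht' He He') => p _ _ h1 h2.
    rewrite !evM !ev_iterSig.
    have E1 : frn (proj1_sig p) (m + m')%N (x p) = frn (proj1_sig p) m' (frn (proj1_sig p) m (x p)).
      by rewrite addnC frDn.
    have E2 : frn (proj1_sig p) (m + m')%N (y p) = frn (proj1_sig p) m (frn (proj1_sig p) m' (y p)).
      by rewrite frDn.
    have h1' := congr1 (frn (proj1_sig p) m') h1; rewrite frM ?pchK // in h1'.
    have h2' := congr1 (frn (proj1_sig p) m) h2; rewrite frM ?pchK // in h2'.
    rewrite /= frM ?pchK // E1 E2 -h1' -h2'; ring.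
split.
  move=> x y [m [s [t [cs [ct [Ht He]]]]]] nx xy.
  have nx' : U (fun p => x p <> 0) := uf_not HU nx.
  have xy' : U (fun p => x p * y p = 1) := xy.
  apply: (@mkSrep _ m t s ct cs).
  - apply: (uf2 Ht (uf_and HU nx' He)) => p h1 [h2 h3].
    by rewrite -h3 mulf_neq0 ?fr_ne //; apply/eqP.
  - apply: (uf2 xy' He) => p h1 h2.
    by rewrite -h2 mulrA -frM ?pchK // [y p * x p]mulrC h1 fr1 ?pchK // mul1r.
split.
  move=> x [m [s [t [[cs1 cs2] [[ct1 ct2] [Ht He]]]]]].
  apply: (@mkSrep _ m (Sig s) (Sig t) (conj cs1 cs2) (conj ct1 ct2)).
  - by apply: (uf2 Ht Ht) => p h _; rewrite evS expf_neq0.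
  - apply: (uf2 Ht He) => p _ h; rewrite !evS -h exprMn; congr (_ * _).
    by rewrite /= frX ?pchK.
move=> x y [m [s [t [cs [ct [Ht He]]]]]] yx.
have yx' : U (fun p => y p ^+ proj1_sig p = x p) := yx.
apply: (@mkSrep _ m.+1 s t cs ct Ht).
by apply: (uf2 yx' He) => p h1 h2; rewrite frS ?pchK // h1.
Qed.

Local Notation B := (fun z => exists x, A x /\ z = iota_u io x).

Lemma gen_rep x : dfield_gen B x -> Srep x.
Proof.
apply; first exact: Srep_dsub.
move=> b [x0 [Ax ->]].
apply: (@mkSrep _ 0%N (Cst x0) One (conj Ax I) (conj I I)).
- by refine (uf_all HU (fun p => _)); exact: oner_neq0.
- by refine (uf_all HU (fun p => _)); rewrite /= mulr1.
Qed.

Lemma common (P : seq (N * seq nat)) : (forall ce, List.In ce P -> Srep ce.1) ->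
  exists m t (Pt : seq (term X * seq nat)), tcl t /\
    (forall ce, List.In ce Pt -> tcl ce.1) /\ map snd Pt = map snd P /\
    U (fun p => ev t p != 0 /\
      map (fun ce => frn (proj1_sig p) m (ce.1 p) * ev t p) P = map (fun ce => ev ce.1 p) Pt).
Proof.
elim: P => [|[q e] P IH] HP.
  exists 0%N, One, [::]; do 3 split => //.
  by refine (uf_all HU (fun p => _)); split => //; exact: oner_neq0.
have [m [t [Pt [ct [cPt [Hsnd HU1]]]]]] : exists m t (Pt : seq (term X * seq nat)), tcl t /\
    (forall ce, List.In ce Pt -> tcl ce.1) /\ map snd Pt = map snd P /\
    U (fun p => ev t p != 0 /\
      map (fun ce => frn (proj1_sig p) m (ce.1 p) * ev t p) P = map (fun ce => ev ce.1 p) Pt).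
  by apply: IH => ce Hce; apply: HP; right.
have [m' [s' [t' [cs' [ct' [Ht' He']]]]]] : Srep q by apply: (HP (q, e)); left.
exists (m + m')%N, (Mul (iter m' (@Sig X) t) (iter m (@Sig X) t')),
  ((Mul (iter m (@Sig X) s') (iter m' (@Sig X) t), e) ::
    map (fun ce => (Mul (iter m' (@Sig X) ce.1) (iter m (@Sig X) t'), ce.2)) Pt).
split; first by apply: tcl_mul; apply: tcl_iter.
split.
  move=> ce /= [<-|]; first by apply: tcl_mul; apply: tcl_iter.
  case/List.in_map_iff => ce' [<- /cPt H]; by apply: tcl_mul; apply: tcl_iter.
split; first by rewrite /= -map_comp Hsnd.
apply: (uf4 HU1 Ht' He' HU1) => p [h1 h2] h3 h4 _.
have fr_ne (z : Kp p) k : z != 0 -> frn (proj1_sig p) k z != 0.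
  by rewrite fr_eq0 //; apply: pchK.
split; first by rewrite evM !ev_iterSig mulf_neq0 ?fr_ne.
rewrite /= evM !ev_iterSig; congr (_ :: _).
  have h4' := congr1 (frn (proj1_sig p) m) h4; rewrite frM ?pchK // in h4'.
  by rewrite evM !ev_iterSig frDn -h4'; ring.
have -> : map (fun ce => frn (proj1_sig p) (m + m')%N (ce.1 p) *
     (frn (proj1_sig p) m' (ev t p) * frn (proj1_sig p) m (ev t' p))) P =
   map (fun z => frn (proj1_sig p) m' z * frn (proj1_sig p) m (ev t' p))
     (map (fun ce => frn (proj1_sig p) m (ce.1 p) * ev t p) P).
  rewrite -map_comp; apply: eq_map => ce /=.
  by rewrite frM ?pchK // addnC frDn mulrA.
rewrite h2 -!map_comp; apply: eq_map => ce /=.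
by rewrite evM ev_iterSig ev_iterSig.
Qed.

Lemma nside n (a : 'I_n -> X) (J : {set 'I_n}) NN :
  alg_dep (dfield_gen B)
    [seq iter j (@sg N) (iota_u io (a i)) | i <- enum J, j <- iota 0%N NN] ->
  exists m (Pt : seq (term X * seq nat)),
   (forall ce, List.In ce Pt -> tcl ce.1 /\ size ce.2 = (size (enum J) * (m + NN))%N) /\
   uniq (map snd Pt) /\
   (exists ce, List.In ce Pt /\ U (fun p => ev ce.1 p != 0)) /\
   U (fun p => pev [seq frn (proj1_sig p) j (iota_u io (a i) p) | i <- enum J, j <- iota 0%N (m + NN)%N]
                   (map (fun ce => (ev ce.1 p, ce.2)) Pt) = 0).
Proof.
set ys := [seq iter j (@sg N) _ | i <- enum J, j <- iota 0%N NN].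
move=> [P [HP [Hu [[ce0 [In0 nz0]] Heq]]]].
have [m [t [Pt0 [ct [cPt [Hsnd HU1]]]]]] := common (fun ce H => gen_rep (proj1 (HP ce H))).
have Hsz : forall e, List.In e (map snd Pt0) -> size e = (size (enum J) * NN)%N.
  move=> e; rewrite Hsnd => /List.in_map_iff [ce [<- /HP [_ ->]]].
  by rewrite size_ys.
exists m, (map (fun ce => (ce.1, pad (size (enum J)) NN m ce.2)) Pt0).
split.
  move=> ce /List.in_map_iff [ce' [<- H]]; split; first exact: (cPt _ H).
  by rewrite /= size_pad // Hsz //; apply: List.in_map.
split.
  rewrite -map_comp (map_comp (pad _ _ _) snd) map_inj_in_uniq ?Hsnd //.
  move=> e1 e2 /inP H1 /inP H2; apply: pad_inj.
  - by apply: Hsz; rewrite Hsnd.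
  - by apply: Hsz; rewrite Hsnd.
split.
  have [i0 [Hi0 Hn0]] := List.In_nth P ce0 ce0 In0.
  have Hsz0 : size Pt0 = size P by rewrite -(size_map snd Pt0) Hsnd size_map.
  pose d := List.nth i0 Pt0 (One, [::]).
  exists (d.1, pad (size (enum J)) NN m d.2); split.
    apply: (List.in_map (fun ce => (ce.1, pad (size (enum J)) NN m ce.2))).
    by apply: List.nth_In; rewrite -size_length Hsz0 size_length.
  have nz0' : U (fun p => ce0.1 p <> 0) := uf_not HU nz0.
  apply: (uf2 HU1 nz0') => p [h1 h2] h3 /=.
  have := congr1 (fun l => nth 0 l i0) h2.
  have Hi0' : (i0 < size P)%N by rewrite size_length; apply/ltP.
  rewrite (nth_map ce0) // (nth_map (One, [::])) ?Hsz0 // => E.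
  rewrite /d -nth_List -E nth_List Hn0 mulf_neq0 //.
  by rewrite fr_eq0 ?pchK //; apply/eqP.
have Heq' : U (fun p => peval ys P p = 0) := Heq.
apply: (uf2 HU1 Heq') => p [h1 h2]; rewrite pevalN => h3.
have Eys : map (fun y : N => y p) ys =
    [seq frn (proj1_sig p) j (iota_u io (a i) p) | i <- enum J, j <- iota 0%N NN].
  rewrite /ys map_flatten -map_comp; congr flatten; apply: eq_map => i /=.
  by rewrite -map_comp; apply: eq_map => j /=; rewrite iter_sgN.
rewrite Eys in h3.
have := key (pchK p) (f := fun i => iota_u io (a i) p) (m := m)
  (Q := map (fun ce => (ev ce.1 p, ce.2)) Pt0) (t := ev t p) _ h3.
rewrite !map2E /=; apply.
- by move=> ce /List.in_map_iff [ce' [<- /HP [_ ->]]]; rewrite size_ys.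
- exact: h2.
- by rewrite Hsnd.
Qed.

End NSide.

Close Scope ring_scope.

Lemma evalt_novar (M : str) X (cs : X -> M) v v' t : tnovar t -> evalt cs v t = evalt cs v' t.
Proof.
elim: t => //=.
- by move=> s IHs u IHu [ns nu]; rewrite IHs ?IHu.
- by move=> s IHs u IHu [ns nu]; rewrite IHs ?IHu.
- by move=> s IHs ns; rewrite IHs.
- by move=> s IHs ns; rewrite IHs.
Qed.

Lemma tprop X (Q : term X -> Prop) ys P :
  Q Zero -> Q One -> (forall a b, Q a -> Q b -> Q (Add a b)) ->
  (forall a b, Q a -> Q b -> Q (Mul a b)) ->
  (forall y, List.In y ys -> Q y) -> (forall ce, List.In ce P -> Q ce.1) ->
  Q (tpeval ys P).
Proof.
move=> Q0 Q1 QA QM Hy.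
have Hm es : Q (tmonom ys es).
  elim: ys es Hy => [|y ys IHy] [|e es] Hy //=.
  apply: (QM); last by apply: IHy => z Hz; apply: (Hy); right.
  by elim: e => //= e IHe; apply: (QM) => //; apply: (Hy); left.
elim: P => //= ce P IH HP; apply: (QA); last by apply: IH => c Hc; apply: HP; right.
by apply: (QM) => //; apply: HP; left.
Qed.

Lemma In_flatten (T : Type) (y : T) ss : List.In y (flatten ss) -> exists s, List.In s ss /\ List.In y s.
Proof.
elim: ss => //= s ss IH /List.in_app_iff [H|/IH [s' [H1 H2]]].
- by exists s; split => //; left.
- by exists s'; split => //; right.
Qed.

Definition yst X n (J : {set 'I_n}) N' : seq (term X) :=
  [seq iter j (@Sig X) (Var (val i)) | i <- enum J, j <- iota 0 N'].

Lemma evalt_yst (M : str) X (cs : X -> M) n (c : 'I_n -> M) y (J : {set 'I_n}) N' :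
  map (evalt cs (join c y)) (yst X J N') = [seq iter j (@sg M) (c i) | i <- enum J, j <- iota 0 N'].
Proof.
rewrite /yst map_flatten -map_comp; congr flatten; apply: eq_map => i /=.
rewrite -map_comp; apply: eq_map => j /=.
by rewrite evalt_iterSig /= /join valK.
Qed.

Lemma yst_vars X n (J : {set 'I_n}) N' y : List.In y (yst X J N') -> tvars_lt n y.
Proof.
rewrite /yst => H; have [s [Hs Hy]] := In_flatten H.
case/List.in_map_iff: Hs => i [Hs _]; subst s.
case/List.in_map_iff: Hy => j [<- _].
by elim: j => //=; apply: ltn_ord.
Qed.

Lemma yst_csts X (A : X -> Prop) n (J : {set 'I_n}) N' y : List.In y (yst X J N') -> tcsts_in A y.
Proof.
rewrite /yst => H; have [s [Hs Hy]] := In_flatten H.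
case/List.in_map_iff: Hs => i [Hs _]; subst s.
case/List.in_map_iff: Hy => j [<- _].
by elim: j.
Qed.

Lemma mside (N M : str) (h : N -> M) X (cs : X -> N) (A : X -> Prop) n
  (c : 'I_n -> M) (J : {set 'I_n}) N' (Pt : seq (term X * seq nat)) v0 (x0 : X) :
  elem_ext h ->
  (forall ce, List.In ce Pt -> (tcsts_in A ce.1 /\ tnovar ce.1) /\ size ce.2 = (size (enum J) * N')%N) ->
  uniq (map snd Pt) ->
  (exists ce, List.In ce Pt /\ ~ eqr (evalt cs v0 ce.1) (zr N)) ->
  eqr (evalt (fun x => h (cs x)) (join c (fun _ => zr M)) (tpeval (yst X J N') Pt)) (zr M) ->
  ~ tindep (dfield_gen (fun z => exists x, A x /\ z = h (cs x))) c J.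
Proof.
move=> hE HPt Hu [ce0 [In0 nz0]] Heq Hind; apply: (Hind N').
set vM := join c (fun _ => zr M).
exists (map (fun ce => (evalt (fun x => h (cs x)) vM ce.1, ce.2)) Pt).
split.
  move=> ce /List.in_map_iff [ce' [<- /HPt [[ca cn] Hs]]]; split.
    move=> S HS HB; apply: (dsub_closed (A := A)) => // x Ax.
    by apply: HB; exists x.
  by rewrite /= Hs size_ys.
split; first by rewrite map2E.
split.
  exists (evalt (fun x => h (cs x)) vM ce0.1, ce0.2); split.
    exact: (List.in_map (fun ce => (evalt (fun x => h (cs x)) vM ce.1, ce.2))).
  have [[_ cn] _] := HPt _ In0.
  exact: (transfer_ne (v := v0) x0 hE cn nz0).
by move: Heq; rewrite evalt_tpeval evalt_yst.
Qed.

Lemma realize_tr (U : (prime_t -> Prop) -> Prop) (Fp : prime_t -> finFieldType)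
  (Kp : prime_t -> closedFieldType) (io : forall p, {rmorphism Fp p -> Kp p})
  n (a : 'I_n -> Fstr U Fp) (t : term (Fstr U Fp)) p :
  evalt (M := Ftstr U Kp) (iota_u io) (join (fun i => iota_u io (a i)) (fun _ => zr _)) t p =
  io p (evalt (M := Fstr U Fp) (fun x => x) (join a (fun _ => zr _)) t p).
Proof.
elim: t => /=.
- by move=> i; rewrite /join; case: (insub i) => [j|] //=; rewrite rmorph0.
- by [].
- by rewrite rmorph0.
- by rewrite rmorph1.
- by move=> s -> u ->; rewrite rmorphD.
- by move=> s -> u ->; rewrite rmorphM.
- by move=> s ->; rewrite rmorphN.
- by move=> s ->; rewrite rmorphXn.
Qed.

Close Scope ring_scope.

Lemma novar_vars X n (t : term X) : tnovar t -> tvars_lt n t.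
Proof.
elim: t => //=.
- by move=> s IHs u IHu [/IHs ? /IHu ?].
- by move=> s IHs u IHu [/IHs ? /IHu ?].
Qed.

Lemma map_In_eq (T1 T2 : Type) (f g : T1 -> T2) l :
  (forall x, List.In x l -> f x = g x) -> map f l = map g l.
Proof.
elim: l => //= x l IH H; rewrite H; last by left.
by rewrite IH // => y Hy; apply: H; right.
Qed.

Lemma gather (I T : Type) (G : I -> T -> Prop) (s : seq I) :
  (forall J, List.In J s -> exists P, G J P) ->
  exists Ps : list T, (forall P, List.In P Ps -> exists J, G J P) /\
    (forall J, List.In J s -> exists P, List.In P Ps /\ G J P).
Proof.
elim: s => [|J s IH] H; first by exists nil; split.
have [Ps [H1 H2]] := IH (fun J' HJ' => H J' (or_intror HJ')).
have [P HP] := H J (or_introl erefl).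
exists (P :: Ps); split.
- by move=> P' [<-|/H1]; [exists J|].
- move=> J' [<-|/H2 [P' [? ?]]]; first by exists P; split => //; left.
  by exists P'; split => //; right.
Qed.

Theorem lemma3p11
  (U : (prime_t -> Prop) -> Prop) (k : prime_t -> nat)
  (Fp : prime_t -> finFieldType) (Kp : prime_t -> closedFieldType)
  (iota : forall p, {rmorphism Fp p -> Kp p})
  (C : form0 -> nat -> R) (D : form0 -> nat -> list (nat * R)) :
  ultrafilter U -> nonprincipal U -> CDM C D ->
  (forall p, f_bound C D (proj1_sig p) (k p)) ->
  (forall p, #|Fp p| = (proj1_sig p ^ k p)%N) ->
  (forall p, alg_closure_Fp (Kp p) (proj1_sig p)) ->
  forall (n : nat) (a : 'I_n -> Fstr U Fp) (A : Fstr U Fp -> Prop) (kk : nat),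
    is_trdeg (fun z => exists x, A x /\ z = iota_u iota x)
             (fun i => iota_u iota (a i)) kk ->
    exists Ps : list (term (Fstr U Fp)),
      (forall P, List.In P Ps -> tcsts_in A P /\ tvars_lt n P) /\
      realizes (fun x => x) Ps a /\
      dim_rk_eq (iota_u iota) A n Ps kk.
Proof.
move=> HU _ _ _ _ Hch n a A kk Htr.
pose c := fun i => iota_u iota (a i).
pose Good (J : {set 'I_n}) (P : term (Fstr U Fp)) :=
  tcsts_in A P /\ tvars_lt n P /\
  @eqr (Ftstr U Kp) (evalt (iota_u iota) (join c (fun _ => zr (Ftstr U Kp))) P) (zr _) /\
  (forall (M : str) (h : Ftstr U Kp -> M) (c' : 'I_n -> M), elem_ext h ->
      eqr (evalt (fun x => h (iota_u iota x)) (join c' (fun _ => zr M)) P) (zr M) ->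
      ~ tindep (dfield_gen (fun z => exists x, A x /\ z = h (iota_u iota x))) c' J).
have goodJ : forall J : {set 'I_n}, (kk < #|J|)%N -> exists P, Good J P.
  move=> J HJ.
  have nind : ~ tindep (dfield_gen (fun z => exists x, A x /\ z = iota_u iota x)) c J.
    by move=> Hi; have := proj2 Htr J Hi; rewrite leqNgt HJ.
  have [NN Hdep] := not_all_not_ex _ _ nind.
  have [m [Pt [HPt [Hu [[ce0 [In0 nz0]] Heq]]]]] := nside HU Hch Hdep.
  exists (tpeval (yst _ J (m + NN)) Pt); split.
    apply: tprop => //; first exact: yst_csts.
    by move=> ce /HPt [[? ?] _].
  split.
    apply: tprop => //; first exact: yst_vars.
    by move=> ce /HPt [[_ ?] _]; apply: novar_vars.
  split.
    apply: (uf_mono HU Heq) => p; rewrite evalt_tpeval evalt_yst pevalN.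
    move=> H; have -> : [seq y p | y <- [seq iter j (@sg (Ftstr U Kp)) (c i) | i <- enum J, j <- seq.iota 0 (m + NN)]]
       = [seq frn (proj1_sig p) j (iota_u iota (a i) p) | i <- enum J, j <- seq.iota 0 (m + NN)].
      rewrite map_flatten -map_comp; congr flatten; apply: eq_map => i /=.
      by rewrite -map_comp; apply: eq_map => j /=; rewrite iter_sgN.
    rewrite map2E (map_In_eq (g := fun ce => (ev iota ce.1 p, ce.2))) //.
    move=> ce /HPt [[_ cn] _] /=.
    by rewrite /ev (evalt_novar _ (fun _ => zr (Ftstr U Kp)) (join c (fun _ => zr (Ftstr U Kp))) cn).
  move=> M h c' hE HM.
  apply: (@mside _ _ h _ (iota_u iota) A n c' J _ Pt (fun _ => zr (Ftstr U Kp)) (zr (Fstr U Fp)) hE HPt Hu _ HM).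
  exists ce0; split => //.
  have nz0' : U (fun p => ~ (evalt (iota_u iota) (fun _ => zr (Ftstr U Kp)) ce0.1 p = 0%R)).
    by apply: (uf_mono HU nz0) => p /eqP.
  exact: (uf_not2 HU nz0').
pose s := filter (fun J : {set 'I_n} => (kk < #|J|)%N) (enum (predT : pred {set 'I_n})).
have [Ps [HPs1 HPs2]] : exists Ps : list (term (Fstr U Fp)),
    (forall P, List.In P Ps -> exists J, Good J P) /\
    (forall J, List.In J s -> exists P, List.In P Ps /\ Good J P).
  apply: gather => J /inP; rewrite mem_filter => /andP [HJ _].
  exact: goodJ.
exists Ps; split.
  by move=> P /HPs1 [J [? [? _]]]; split.
split.
  move=> P /HPs1 [J [_ [_ [HN _]]]].
  apply: (uf_mono HU HN) => p; rewrite realize_tr => /eqP.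
  by rewrite fmorph_eq0 => /eqP.
split.
  exists (Ftstr U Kp), (fun x => x), c; split; first by move=> phi v; split.
  split; last exact: Htr.
  by move=> P /HPs1 [J [_ [_ [HN _]]]]; exact: HN.
move=> M h c' hE HR J HJ; rewrite leqNgt; apply/negP => Hlt.
have [|P [InP [_ [_ [_ HG]]]]] := HPs2 J.
  by apply/inP; rewrite mem_filter Hlt mem_enum.
exact: (HG M h c' hE (HR P InP) HJ).
Qed.
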